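(* Let $X$ be a Tychonoff space and $\mathcal A\subset\mathcal P(X)$ a family satisfying (A1)–(A4). For each $A\in\mathcal A$ let $cA$ and $dA$ be Hausdorff compactifications of $A$ (with $A$ carrying the subspace topology), and write $c\mathcal A=(cA)_{A\in\mathcal A}$, $d\mathcal A=(dA)_{A\in\mathcal A}$. (i) For every space $\mathcal E=(E(A))_{A\in\mathcal A}$ as in the definition of amalgamation and every regular space $Z$, a map $f:\mathrm{Amg}(X,\mathcal E)\to Z$ is continuous iff $f|_X$ and all $f|_{E(A)}$, $A\in\mathcal A$, are continuous. (ii) $\mathrm{Amg}(X,c\mathcal A)$ is a (Hausdorff) compactification of $X$. (iii) If $cA\preceq dA$ for every $A\in\mathcal A$, then $\mathrm{Amg}(X,c\mathcal A)\preceq\mathrm{Amg}(X,d\mathcal A)$. (iv) For every compactification $cX$ of $X$, $\mathrm{Amg}(X,(\overline A^{cX})_{A\in\mathcal A})\succeq cX$. (v) In particular, $\beta X=\mathrm{Amg}(X,(\beta A)_{A\in\mathcal A})$.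
   Context: Conditions on $\mathcal A\subset\mathcal P(X)$: (A1) every $A\in\mathcal A$ is clopen in $X$; (A2) $A\cap A'$ is compact for distinct $A,A'\in\mathcal A$; (A3) $K:=X\setminus\bigcup\mathcal A$ is compact; (A4) for every collection $\mathcal U$ of open subsets of $X$ covering $K$ there is a finite $\mathcal A'\subset\mathcal A$ such that for each $A\in\mathcal A\setminus\mathcal A'$ some $U\in\mathcal U$ satisfies $U\cup\bigcup\mathcal A'\supset A$. Amalgamation: let $\mathcal E=(E(A))_{A\in\mathcal A}$ be topological spaces with $A$ a dense subspace of $E(A)$. The set $\mathrm{Amg}(X,\mathcal E)=X\cup\bigcup_{A}E(A)$ is formed so that $X\cap E(A)=A$ and $E(A)\cap E(A')=A\cap A'$ for $A\ne A'$. For $P\subset Q$ spaces and $G$ open in $P$, $W^Q_P(G)$ denotes the largest open $W\subset Q$ with $W\cap P=G$. For $U$ open in $X$, $V_U=U\cup\bigcup_{A\in\mathcal A}W^{E(A)}_A(U\cap A)$. The topology of $\mathrm{Amg}(X,\mathcal E)$ has as basis all open subsets of each $E(A)$ and all $V_U$, $U$ open in $X$. Compactification order: $cX\succeq dX$ if there is a continuous $f:cX\to dX$ with $f|_X=\mathrm{id}_X$. $\beta$ denotes Čech–Stone compactification. *)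

(* Defs.v *)
From Stdlib Require Import Reals Lra List Classical ClassicalEpsilon.
Open Scope R_scope.

Record space := Space {
  pt :> Type;
  isopen : (pt -> Prop) -> Prop;
  open_setT : isopen (fun _ => True);
  open_setI : forall U V, isopen U -> isopen V -> isopen (fun x => U x /\ V x);
  open_bigU : forall F : (pt -> Prop) -> Prop,
      (forall U, F U -> isopen U) -> isopen (fun x => exists U, F U /\ U x)
}.
Arguments isopen {s} _.

Definition isclosed {X : space} (F : X -> Prop) := isopen (fun x => ~ F x).
Definition clopen {X : space} (A : X -> Prop) := isopen A /\ isclosed A.

Definition continuous {X Y : space} (f : X -> Y) :=
  forall V : Y -> Prop, isopen V -> isopen (fun x => V (f x)).

Definition closure {X : space} (P : X -> Prop) : X -> Prop :=
  fun x => forall U, isopen U -> U x -> exists y, P y /\ U y.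

Definition sub_open (X : space) (P : X -> Prop) (V : {x : X | P x} -> Prop) :=
  exists U : X -> Prop, isopen U /\ forall x, V x <-> U (proj1_sig x).

Lemma sub_open_setT (X : space) (P : X -> Prop) : sub_open X P (fun _ => True).
Proof. exists (fun _ => True); split; [apply open_setT| tauto]. Qed.

Lemma sub_open_setI (X : space) (P : X -> Prop) U V :
  sub_open X P U -> sub_open X P V -> sub_open X P (fun x => U x /\ V x).
Proof.
  intros [U' [HU HU']] [V' [HV HV']]. exists (fun x => U' x /\ V' x).
  split; [apply open_setI; auto|]. intros x; rewrite HU', HV'; tauto.
Qed.

Lemma sub_open_bigU (X : space) (P : X -> Prop) (F : ({x : X | P x} -> Prop) -> Prop) :
  (forall U, F U -> sub_open X P U) ->
  sub_open X P (fun x => exists U, F U /\ U x).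
Proof.
  intros HF.
  exists (fun y => exists W, (isopen W /\ exists V, F V /\
                     forall x, V x <-> W (proj1_sig x)) /\ W y).
  split.
  - apply open_bigU. intros W [HW _]; exact HW.
  - intros x; split.
    + intros [V [HV Vx]]. destruct (HF V HV) as [W [HW HW']].
      exists W; split; [split; [exact HW| exists V; auto]| apply HW'; exact Vx].
    + intros [W [[_ [V [HV HV']]] Wx]]. exists V; split; [exact HV| apply HV'; exact Wx].
Qed.

Definition sub (X : space) (P : X -> Prop) : space :=
  Space {x : X | P x} (sub_open X P) (sub_open_setT X P)
        (sub_open_setI X P) (sub_open_bigU X P).

Definition R_open (U : R -> Prop) :=
  forall x, U x -> exists e, 0 < e /\ forall y, Rabs (y - x) < e -> U y.

Lemma R_open_setT : R_open (fun _ => True).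
Proof. intros x _; exists 1; split; [lra| auto]. Qed.

Lemma R_open_setI U V : R_open U -> R_open V -> R_open (fun x => U x /\ V x).
Proof.
  intros HU HV x [Ux Vx]. destruct (HU x Ux) as [e1 [He1 H1]].
  destruct (HV x Vx) as [e2 [He2 H2]]. exists (Rmin e1 e2); split.
  - apply Rmin_pos; auto.
  - intros y Hy; split; [apply H1| apply H2];
      eapply Rlt_le_trans; eauto; [apply Rmin_l| apply Rmin_r].
Qed.

Lemma R_open_bigU (F : (R -> Prop) -> Prop) :
  (forall U, F U -> R_open U) -> R_open (fun x => exists U, F U /\ U x).
Proof.
  intros HF x [U [HU Ux]]. destruct (HF U HU x Ux) as [e [He H]].
  exists e; split; [exact He|]. intros y Hy; exists U; auto.
Qed.

Definition R_space : space := Space R R_open R_open_setT R_open_setI R_open_bigU.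

Definition T1 (X : space) :=
  forall x y : X, x <> y -> exists U, isopen U /\ U y /\ ~ U x.

Definition hausdorff (X : space) :=
  forall x y : X, x <> y -> exists U V, isopen U /\ isopen V /\ U x /\ V y /\
    forall z, ~ (U z /\ V z).

Definition regular (X : space) :=
  T1 X /\ forall (F : X -> Prop) (x : X), isclosed F -> ~ F x ->
    exists U V, isopen U /\ isopen V /\ U x /\ (forall y, F y -> V y) /\
      forall z, ~ (U z /\ V z).

Definition tychonoff (X : space) :=
  T1 X /\ forall (F : X -> Prop) (x : X), isclosed F -> ~ F x ->
    exists f : X -> R_space, continuous f /\ f x = 0 /\ forall y, F y -> f y = 1.

Definition compact (X : space) :=
  forall F : (X -> Prop) -> Prop, (forall U, F U -> isopen U) ->
    (forall x, exists U, F U /\ U x) ->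
    exists l : list (X -> Prop), (forall U, In U l -> F U) /\
      forall x, exists U, In U l /\ U x.

Definition compact_set {X : space} (K : X -> Prop) :=
  forall F : (X -> Prop) -> Prop, (forall U, F U -> isopen U) ->
    (forall x, K x -> exists U, F U /\ U x) ->
    exists l : list (X -> Prop), (forall U, In U l -> F U) /\
      forall x, K x -> exists U, In U l /\ U x.

Definition embedding {Y E : space} (h : Y -> E) :=
  (forall y1 y2, h y1 = h y2 -> y1 = y2) /\ continuous h /\
  forall U : Y -> Prop, isopen U -> exists W : E -> Prop, isopen W /\
    forall y, U y <-> W (h y).

Definition dense_image {Y E : space} (h : Y -> E) :=
  forall W : E -> Prop, isopen W -> forall e, W e -> exists y, W (h y).

Definition compactification (Y K : space) (h : Y -> K) :=
  compact K /\ hausdorff K /\ embedding h /\ dense_image h.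

(* cY >= dY : there is a continuous f : cY -> dY which is the identity on Y *)
Definition comp_ge {Y K1 K2 : space} (h1 : Y -> K1) (h2 : Y -> K2) :=
  exists f : K1 -> K2, continuous f /\ forall y, f (h1 y) = h2 y.

Definition cech_stone (Y K : space) (h : Y -> K) :=
  compactification Y K h /\
  forall (Z : space) (f : Y -> Z), compact Z -> hausdorff Z -> continuous f ->
    exists F : K -> Z, continuous F /\ forall y, F (h y) = f y.

Definition residual {X : space} (AA : (X -> Prop) -> Prop) : X -> Prop :=
  fun x => ~ exists A, AA A /\ A x.

Definition condA1 {X : space} (AA : (X -> Prop) -> Prop) :=
  forall A, AA A -> clopen A.
Definition condA2 {X : space} (AA : (X -> Prop) -> Prop) :=
  forall A A', AA A -> AA A' -> A <> A' -> compact_set (fun x => A x /\ A' x).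
Definition condA3 {X : space} (AA : (X -> Prop) -> Prop) :=
  compact_set (residual AA).
Definition condA4 {X : space} (AA : (X -> Prop) -> Prop) :=
  forall UU : (X -> Prop) -> Prop, (forall U, UU U -> isopen U) ->
    (forall x, residual AA x -> exists U, UU U /\ U x) ->
    exists l : list (X -> Prop), (forall A, In A l -> AA A) /\
      forall A, AA A -> ~ In A l ->
        exists U, UU U /\ forall x, A x -> U x \/ exists A', In A' l /\ A' x.

Definition Idx (X : space) (AA : (X -> Prop) -> Prop) := {A : X -> Prop | AA A}.

Definition Asp {X : space} {AA : (X -> Prop) -> Prop} (i : Idx X AA) : space :=
  sub X (proj1_sig i).

Section Amalgamation.
Variables (X : space) (AA : (X -> Prop) -> Prop)
  (E : Idx X AA -> space) (emb : forall i, Asp i -> E i).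

(* X together with the remainders E(A) \ A; thus X ∩ E(A) = A and
   E(A) ∩ E(A') = A ∩ A' for A <> A'. *)
Definition amg_carrier : Type :=
  (X + {i : Idx X AA & {e : E i | ~ exists a, emb i a = e}})%type.

Definition amg_in (x : X) : amg_carrier := inl x.

(* the inclusion E(A) -> Amg(X, E) *)
Definition amg_j (i : Idx X AA) (e : E i) : amg_carrier :=
  match excluded_middle_informative (exists a, emb i a = e) with
  | left H => inl (proj1_sig (proj1_sig (constructive_indefinite_description _ H)))
  | right H => inr (existT _ i (exist _ e H))
  end.

(* W^{E(A)}_A(G): the largest open W of E(A) with W ∩ A = G *)
Definition Wmax (i : Idx X AA) (G : Asp i -> Prop) : E i -> Prop :=
  fun e => exists W : E i -> Prop, isopen W /\ (forall a, W (emb i a) <-> G a) /\ W e.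

(* V_U = U ∪ ⋃_A W^{E(A)}_A(U ∩ A) *)
Definition VU (U : X -> Prop) : amg_carrier -> Prop :=
  fun p => match p with
           | inl x => U x
           | inr (existT _ i (exist _ e _)) => Wmax i (fun a => U (proj1_sig a)) e
           end.

Definition amg_basic (B : amg_carrier -> Prop) :=
  (exists i (O : E i -> Prop), isopen O /\
     forall p, B p <-> exists e, O e /\ amg_j i e = p)
  \/ (exists U : X -> Prop, isopen U /\ forall p, B p <-> VU U p).

Definition is_topology {T : Type} (O : (T -> Prop) -> Prop) :=
  O (fun _ => True) /\
  (forall U V, O U -> O V -> O (fun x => U x /\ V x)) /\
  (forall F : (T -> Prop) -> Prop, (forall U, F U -> O U) ->
     O (fun x => exists U, F U /\ U x)).

Definition amg_open (W : amg_carrier -> Prop) :=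
  forall O, is_topology O -> (forall B, amg_basic B -> O B) -> O W.

Lemma amg_open_setT : amg_open (fun _ => True).
Proof. intros O [H _] _; exact H. Qed.

Lemma amg_open_setI U V : amg_open U -> amg_open V -> amg_open (fun x => U x /\ V x).
Proof. intros HU HV O HO HB. pose proof HO as [_ [HI _]]. apply HI; [apply HU| apply HV]; auto. Qed.

Lemma amg_open_bigU (F : (amg_carrier -> Prop) -> Prop) :
  (forall U, F U -> amg_open U) -> amg_open (fun x => exists U, F U /\ U x).
Proof.
  intros HF O HO HB. pose proof HO as [_ [_ HU]]. apply HU. intros U HFU.
  apply HF; auto.
Qed.

Definition Amg : space :=
  Space amg_carrier amg_open amg_open_setT amg_open_setI amg_open_bigU.

End Amalgamation.

Arguments amg_in {X AA E emb} x.
Arguments amg_j {X AA E emb} i e.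

Definition closE {X : space} (AA : (X -> Prop) -> Prop) (K : space) (h : X -> K)
  (i : Idx X AA) : space :=
  sub K (closure (fun k => exists x, proj1_sig i x /\ h x = k)).

Lemma closE_mem {X : space} (AA : (X -> Prop) -> Prop) (K : space) (h : X -> K)
  (i : Idx X AA) (a : Asp i) :
  closure (fun k => exists x, proj1_sig i x /\ h x = k) (h (proj1_sig a)).
Proof. intros U _ HU. exists (h (proj1_sig a)); split; auto. exists (proj1_sig a); split; auto.
  exact (proj2_sig a). Qed.

Definition closEmb {X : space} (AA : (X -> Prop) -> Prop) (K : space) (h : X -> K)
  (i : Idx X AA) (a : Asp i) : closE AA K h i :=
  exist _ (h (proj1_sig a)) (closE_mem AA K h i a).

(* Main.v *)
Require Import Defs.
From Stdlib Require Import Reals List Classical ClassicalEpsilon.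
From Stdlib Require Import FunctionalExtensionality PropExtensionality ProofIrrelevance Eqdep Lra.

Lemma open_ext {X : space} (U V : X -> Prop) : isopen U -> (forall x, U x <-> V x) -> isopen V.
Proof. intros HU H. assert (U = V) as <- by (extensionality x; apply propositional_extensionality; auto). exact HU. Qed.

Lemma local_open {X : space} (P : X -> Prop) :
  (forall x, P x -> exists O, isopen O /\ O x /\ forall y, O y -> P y) -> isopen P.
Proof.
  intros H. apply (open_ext (fun x => exists O, (isopen O /\ forall y, O y -> P y) /\ O x)).
  - apply open_bigU. intros U [HU _]; exact HU.
  - intros x; split.
    + intros [O [[_ HO] Ox]]; auto.
    + intros Px. destruct (H x Px) as [O [HO [Ox HOP]]]. exists O; auto.
Qed.

Lemma open_union2 {X:space} (U V : X -> Prop) : isopen U -> isopen V -> isopen (fun x => U x \/ V x).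
Proof. intros. apply (open_ext (fun x => exists W, (W = U \/ W = V) /\ W x)).
 - apply open_bigU. intros W [->| ->]; auto.
 - intros x; split. intros [W [[->| ->] Hx]]; auto. intros [Hx|Hx]; eauto.
Qed.

Lemma open_closed_compl {X:space} (U : X -> Prop) : isopen U -> isclosed (fun x => ~ U x).
Proof. intros H. unfold isclosed. apply (open_ext U); auto. intros x; split; [tauto| apply NNPP]. Qed.

Lemma cont_ext {X Y : space} (f g : X -> Y) : (forall x, f x = g x) -> continuous g -> continuous f.
Proof. intros H Hg. assert (f = g) as -> by (extensionality x; auto). exact Hg. Qed.

Lemma cont_comp {X Y Z : space} (f : X -> Y) (g : Y -> Z) : continuous f -> continuous g -> continuous (fun x => g (f x)).
Proof. intros Hf Hg V HV. apply (Hf _ (Hg V HV)). Qed.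

Lemma list_choice {A B : Type} (R : A -> B -> Prop) (l : list A) :
  (forall a, In a l -> exists b, R a b) ->
  exists lb, (forall b, In b lb -> exists a, In a l /\ R a b) /\
             (forall a, In a l -> exists b, In b lb /\ R a b).
Proof.
  induction l as [|a l IH]; intros H.
  - exists nil; split; [intros b []| intros a []].
  - destruct IH as [lb [H1 H2]]. intros; apply H; simpl; auto.
    destruct (H a (or_introl eq_refl)) as [b Hb].
    exists (b :: lb); split.
    + intros b' [<-|Hb']; [exists a; simpl; auto|]. destruct (H1 b' Hb') as [a' [? ?]]; exists a'; simpl; auto.
    + intros a' [<-|Ha']; [exists b; simpl; auto|]. destruct (H2 a' Ha') as [b' [? ?]]; exists b'; simpl; auto.
Qed.

Lemma list_filter {A : Type} (P : A -> Prop) (l : list A) :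
  exists l', (forall a, In a l' -> P a /\ In a l) /\ forall a, In a l -> P a -> In a l'.
Proof.
  induction l as [|a l IH].
  - exists nil; split; [intros a []| intros a []].
  - destruct IH as [l' [H1 H2]]. destruct (classic (P a)) as [Pa|Pa].
    + exists (a :: l'); split.
      * intros b [<-|Hb]; [simpl; auto|]. destruct (H1 b Hb); simpl; auto.
      * intros b [<-|Hb] Pb; simpl; auto.
    + exists l'; split.
      * intros b Hb. destruct (H1 b Hb); simpl; auto.
      * intros b [<-|Hb] Pb; [contradiction| auto].
Qed.

Lemma sep_point_list {X:space} (e : X) (l : list (X -> Prop)) :
  (forall V, In V l -> exists U, isopen U /\ U e /\ forall z, ~ (U z /\ V z)) ->
  exists U, isopen U /\ U e /\ forall z, U z -> forall V, In V l -> ~ V z.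
Proof.
  induction l as [|V l IH]; intros H.
  - exists (fun _ => True). split; [apply open_setT|]. split; [exact I|]. intros z _ V [].
  - destruct IH as [U1 [HU1 [U1e HU1']]]. intros; apply H; simpl; auto.
    destruct (H V (or_introl eq_refl)) as [U2 [HU2 [U2e HU2']]].
    exists (fun z => U1 z /\ U2 z). split; [apply open_setI; auto|]. split; auto.
    intros z [Hz1 Hz2] V' [<-|HV'].
    + intro; apply (HU2' z); auto.
    + apply (HU1' z Hz1 V' HV').
Qed.

Lemma sep_point_compact {X:space} (HX : hausdorff X) (C : X -> Prop) (e : X) :
  compact_set C -> ~ C e ->
  exists U V, isopen U /\ isopen V /\ U e /\ (forall c, C c -> V c) /\ forall z, ~ (U z /\ V z).
Proof.
  intros HC Ce.
  destruct (HC (fun V => isopen V /\ exists U, isopen U /\ U e /\ forall z, ~ (U z /\ V z))) as [l [Hl Hlc]].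
  - intros U [HU _]; exact HU.
  - intros c Cc. assert (c <> e) as Hce by (intro; subst; contradiction).
    destruct (HX c e Hce) as [V [U [HV [HU [Vc [Ue HUV]]]]]].
    exists V. split; [split; [exact HV| exists U; repeat split; auto]| exact Vc].
    intros z [? ?]; apply (HUV z); auto.
  - destruct (sep_point_list e l) as [U [HU [Ue HU']]].
    + intros V HV. destruct (Hl V HV) as [_ H]; exact H.
    + exists U, (fun z => exists V, In V l /\ V z). repeat split; auto.
      * apply open_bigU. intros V HV; apply (Hl V HV).
      * intros z [Uz [V [HV Vz]]]. apply (HU' z Uz V HV Vz).
Qed.

Lemma compact_closed {X:space} (HX: hausdorff X) (C : X -> Prop) : compact_set C -> isclosed C.
Proof. intros HC. unfold isclosed. apply local_open. intros x Cx.
 destruct (sep_point_compact HX C x HC Cx) as [U [V [HU [HV [Ux [HCV HUV]]]]]].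
 exists U. repeat split; auto. intros y Uy Cy. apply (HUV y); auto. Qed.

Lemma compact_set_ext {X:space} (K K' : X -> Prop) : compact_set K -> (forall x, K x <-> K' x) -> compact_set K'.
Proof. intros HK H F HF Hc. destruct (HK F HF) as [l [Hl Hlc]].
  intros x Kx; apply Hc, H, Kx. exists l; split; auto. intros x Kx; apply Hlc, H, Kx. Qed.

Lemma compact_set_union {X:space} (K1 K2 : X -> Prop) :
  compact_set K1 -> compact_set K2 -> compact_set (fun x => K1 x \/ K2 x).
Proof. intros H1 H2 F HF Hcov.
 destruct (H1 F HF) as [l1 [Hl1 Hc1]]. intros; apply Hcov; auto.
 destruct (H2 F HF) as [l2 [Hl2 Hc2]]. intros; apply Hcov; auto.
 exists (l1 ++ l2). split.
 - intros U HU; apply in_app_or in HU as [HU|HU]; auto.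
 - intros x [Hx|Hx].
   + destruct (Hc1 x Hx) as [U [? ?]]; exists U; split; auto; apply in_or_app; auto.
   + destruct (Hc2 x Hx) as [U [? ?]]; exists U; split; auto; apply in_or_app; auto.
Qed.

Lemma compact_union_list {X:space} (A : X -> Prop) (la : list (X -> Prop)) :
  (forall A', In A' la -> compact_set (fun x => A x /\ A' x)) ->
  compact_set (fun x => A x /\ exists A', In A' la /\ A' x).
Proof.
  induction la as [|A0 la IH]; intros H.
  - intros F _ _. exists nil. split; [intros U []|]. intros x [_ [A' [[] _]]].
  - apply (compact_set_ext (fun x => (A x /\ A0 x) \/ (A x /\ exists A', In A' la /\ A' x))).
    + apply compact_set_union; [apply H; simpl; auto| apply IH; intros; apply H; simpl; auto].
    + intros x; split.
      * intros [[? ?]|[? [A' [? ?]]]]; split; auto; [exists A0|exists A']; simpl; auto.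
      * intros [Ax [A' [[<-|HA'] HA'x]]]; [left|right]; auto. split; auto; exists A'; auto.
Qed.

Lemma closed_compact {X:space} (HX: Defs.compact X) (F : X -> Prop) : isclosed F -> compact_set F.
Proof. intros HF G HG Hcov.
 destruct (HX (fun U => G U \/ U = (fun x => ~ F x))) as [l [Hl Hc]].
 - intros U [HU| ->]; auto.
 - intros x. destruct (classic (F x)) as [Fx|Fx].
   + destruct (Hcov x Fx) as [U [? ?]]; eauto.
   + exists (fun x => ~F x); auto.
 - destruct (list_filter G l) as [l' [H1 H2]]. exists l'. split.
   + intros U HU; apply H1; auto.
   + intros x Fx. destruct (Hc x) as [U [HUl Ux]]. exists U. split; auto.
     destruct (Hl U HUl) as [GU| ->]; [auto| contradiction].
Qed.

Lemma hausdorff_T1 (X : space) : hausdorff X -> T1 X.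
Proof. intros H x y Hxy. destruct (H x y Hxy) as [U [V [HU [HV [Ux [Vy HUV]]]]]].
  exists V. split; auto. split; auto. intro Vx; apply (HUV x); auto. Qed.

Lemma compact_hausdorff_regular (X : space) : Defs.compact X -> hausdorff X -> regular X.
Proof. intros HC HH. split; [apply hausdorff_T1; auto|]. intros F x HF Fx.
  destruct (sep_point_compact HH F x (closed_compact HC F HF) Fx) as [U [V ?]]. exists U, V; tauto. Qed.

Lemma tychonoff_hausdorff (X : space) : tychonoff X -> hausdorff X.
Proof.
  intros [HT HC] x y Hxy. destruct (HT x y Hxy) as [U [HU [Uy Ux]]].
  destruct (HC (fun z => ~ U z) y (open_closed_compl U HU)) as [f [Hf [fy fx]]].
  { intro H; apply H; auto. }
  specialize (fx x Ux).
  exists (fun z => f z > 1/2), (fun z => f z < 1/2). repeat split.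
  - apply (Hf (fun r => r > 1/2)). intros r Hr. exists (r - 1/2). split; [lra|].
    intros s Hs. apply Rabs_def2 in Hs. lra.
  - apply (Hf (fun r => r < 1/2)). intros r Hr. exists (1/2 - r). split; [lra|].
    intros s Hs. apply Rabs_def2 in Hs. lra.
  - simpl. rewrite fx; lra.
  - simpl. rewrite fy; lra.
  - intros z [H1 H2]; lra.
Qed.
Section AmgS.
Variables (X : space) (AA : (X -> Prop) -> Prop) (E : Idx X AA -> space) (emb : forall i, Asp i -> E i).
Hypothesis Hemb : forall i, embedding (emb i) /\ dense_image (emb i).
Hypothesis HA1 : condA1 AA.

Implicit Types (i : Idx X AA).
Local Notation AM := (Amg X AA E emb).
Local Notation car := (amg_carrier X AA E emb).
Local Notation jj i e := (@amg_j X AA E emb i e).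
Local Notation VV U := (VU X AA E emb U).
Local Notation WM i G := (Wmax X AA E emb i G).

Lemma emb_inj i a1 a2 : emb i a1 = emb i a2 -> a1 = a2.
Proof. apply (Hemb i). Qed.

Lemma emb_cont i : continuous (emb i).
Proof. apply (Hemb i). Qed.

Lemma emb_dense i : dense_image (emb i).
Proof. apply (Hemb i). Qed.

Lemma asp_eq i (a1 a2 : Asp i) : proj1_sig a1 = proj1_sig a2 -> a1 = a2.
Proof. destruct a1 as [x1 p1], a2 as [x2 p2]; simpl; intros ->. f_equal; apply proof_irrelevance. Qed.

Lemma idx_eq (i i' : Idx X AA) : proj1_sig i = proj1_sig i' -> i = i'.
Proof. destruct i as [x1 p1], i' as [x2 p2]; simpl; intros ->. f_equal; apply proof_irrelevance. Qed.

Lemma J1 i a : jj i (emb i a) = inl (proj1_sig a).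
Proof.
  unfold amg_j. destruct (excluded_middle_informative _) as [H|H].
  - destruct (constructive_indefinite_description _ H) as [a' Ha']; simpl.
    apply emb_inj in Ha'. subst; reflexivity.
  - exfalso; apply H; eauto.
Qed.

Lemma J2 i e (H : ~ exists a, emb i a = e) : jj i e = inr (existT _ i (exist _ e H)).
Proof.
  unfold amg_j. destruct (excluded_middle_informative _) as [H'|H'].
  - contradiction.
  - do 3 f_equal. apply proof_irrelevance.
Qed.

Lemma J3 i e x : jj i e = inl x -> exists a, emb i a = e /\ proj1_sig a = x.
Proof.
  unfold amg_j. destruct (excluded_middle_informative _) as [H|H].
  - destruct (constructive_indefinite_description _ H) as [a' Ha']; simpl.
    intros Heq; injection Heq; intros; eauto.
  - discriminate.
Qed.

Lemma J5 i i' e e' : jj i' e' = jj i e -> (~ exists a, emb i a = e) ->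
  existT (fun k => E k) i' e' = existT _ i e.
Proof.
  intros Heq H. rewrite (J2 i e H) in Heq.
  destruct (classic (exists a, emb i' a = e')) as [[a <-]|H'].
  - rewrite J1 in Heq; discriminate.
  - rewrite (J2 i' e' H') in Heq. injection Heq; intros Heq' _.
    exact Heq'.
Qed.

Lemma J4 i e1 e2 : jj i e1 = jj i e2 -> e1 = e2.
Proof.
  intros Heq. destruct (classic (exists a, emb i a = e2)) as [[a2 <-]|H2].
  - rewrite J1 in Heq. apply J3 in Heq as [a1 [<- Ha]]. f_equal. apply asp_eq; auto.
  - apply J5 in Heq; auto. apply inj_pair2 in Heq; auto.
Qed.

Lemma exists_W i (U : X -> Prop) : isopen U ->
  exists W, isopen W /\ forall a, W (emb i a) <-> U (proj1_sig a).
Proof.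
  intros HU. destruct (Hemb i) as [[_ [_ H]] _].
  destruct (H (fun a => U (proj1_sig a))) as [W [HW HW']].
  - exists U; split; auto; tauto.
  - exists W; split; auto. intros a; rewrite <- HW'; tauto.
Qed.

Lemma emb_pre i (O : E i -> Prop) : isopen O ->
  exists U, isopen U /\ forall a, O (emb i a) <-> U (proj1_sig a).
Proof. intros HO. destruct (emb_cont i O HO) as [U [HU HU']]. exists U; auto. Qed.

Lemma Wmax_open i G : isopen (WM i G).
Proof.
  apply (open_ext (fun e => exists W, (isopen W /\ (forall a, W (emb i a) <-> G a)) /\ W e)).
  - apply open_bigU. intros W [HW _]; exact HW.
  - intros e; unfold Wmax; split.
    + intros [W [[? ?] ?]]; eauto.
    + intros [W [? [? ?]]]; eauto.
Qed.

Lemma Wmax_emb i G a : WM i G (emb i a) -> G a.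
Proof. intros [W [_ [H1 H2]]]. apply H1; auto. Qed.

Lemma Wmax_emb' i U a : isopen U -> U (proj1_sig a) -> WM i (fun a => U (proj1_sig a)) (emb i a).
Proof. intros HU Ua. destruct (exists_W i U HU) as [W [HW HW']]. exists W; split; auto.
  split; auto. apply HW'; auto. Qed.

Lemma VU_j i U e : isopen U -> VV U (jj i e) <-> WM i (fun a => U (proj1_sig a)) e.
Proof.
  intros HU. destruct (classic (exists a, emb i a = e)) as [[a <-]|H].
  - rewrite J1. simpl. split; [apply Wmax_emb'; auto| apply Wmax_emb].
  - rewrite (J2 i e H). simpl. tauto.
Qed.

Lemma Wmax_mono i (U1 U2 : X -> Prop) e : isopen U1 -> (forall x, U2 x -> U1 x) ->
  WM i (fun a => U2 (proj1_sig a)) e -> WM i (fun a => U1 (proj1_sig a)) e.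
Proof.
  intros HU1 H12 [W [HW [HW' We]]]. destruct (exists_W i U1 HU1) as [W1 [HW1 HW1']].
  exists (fun e => W e \/ W1 e). split; [apply open_union2; auto|]. split; auto.
  intros a; split.
  - intros [Wa|Wa]; [apply H12, HW'; auto| apply HW1'; auto].
  - intros; right; apply HW1'; auto.
Qed.

Lemma VU_mono (U1 U2 : X -> Prop) p : isopen U1 -> (forall x, U2 x -> U1 x) -> VV U2 p -> VV U1 p.
Proof.
  intros HU1 H12. destruct p as [x|[i [e H]]]; simpl; auto.
  apply Wmax_mono; auto.
Qed.

Lemma Wmax_disj i (U U' : X -> Prop) e : (forall x, ~ (U x /\ U' x)) ->
  ~ (WM i (fun a => U (proj1_sig a)) e /\ WM i (fun a => U' (proj1_sig a)) e).
Proof.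
  intros HUU [[W [HW [HW' We]]] [W' [HW2 [HW2' We']]]].
  destruct (emb_dense i (fun e => W e /\ W' e) (open_setI _ _ _ HW HW2) e (conj We We')) as [a [Wa Wa']].
  apply (HUU (proj1_sig a)); split; [apply HW'| apply HW2']; auto.
Qed.

Lemma amg_ind (P : (car -> Prop) -> Prop) : is_topology P ->
  (forall B, amg_basic X AA E emb B -> P B) -> forall W, amg_open X AA E emb W -> P W.
Proof. intros HP HB W HW; apply HW; auto. Qed.

Lemma basic_open B : amg_basic X AA E emb B -> amg_open X AA E emb B.
Proof. intros HB O _ H; apply H; auto. Qed.

Lemma jO_open i O : isopen O -> amg_open X AA E emb (fun p => exists e, O e /\ jj i e = p).
Proof. intros HO. apply basic_open. left. exists i, O. split; auto; tauto. Qed.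

Lemma VU_open U : isopen U -> amg_open X AA E emb (VV U).
Proof. intros HU. apply basic_open. right. exists U. split; auto; tauto. Qed.

Lemma pull_top {Y : space} (g : Y -> car) : is_topology (fun W => isopen (fun y => W (g y))).
Proof.
  split; [apply open_setT|]. split.
  - intros U V HU HV. apply open_setI; auto.
  - intros F HF. apply (open_ext (fun y => exists V, (exists U, F U /\ V = fun y => U (g y)) /\ V y)).
    + apply open_bigU. intros V [U [HU ->]]; auto.
    + intros y; split.
      * intros [V [[U [HU ->]] HV]]; eauto.
      * intros [U [HU HUy]]. exists (fun y => U (g y)); eauto.
Qed.

Lemma amg_in_cont : @continuous X AM (fun x => @amg_in X AA E emb x).
Proof.
  intros W HW. apply (amg_ind (fun W => isopen (fun x : X => W (@amg_in X AA E emb x)))); auto.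
  - apply pull_top.
  - intros B [[i [O [HO HB]]] | [U [HU HB]]].
    + destruct (emb_pre i O HO) as [U [HU HU']].
      apply (open_ext (fun x => proj1_sig i x /\ U x)).
      * apply open_setI; auto. apply (HA1 _ (proj2_sig i)).
      * intros x; rewrite HB; split.
        -- intros [Ax Ux]. exists (emb i (exist _ x Ax)). rewrite J1. split; auto. apply HU'; auto.
        -- intros [e [Oe He]]. apply J3 in He as [a [<- <-]]. split; [apply (proj2_sig a)| apply HU'; auto].
    + apply (open_ext U); auto. intros x; rewrite HB; simpl; tauto.
Qed.

Lemma Rem i : forall S, amg_open X AA E emb S -> forall e, (~ exists a, emb i a = e) -> S (jj i e) ->
  exists O, isopen O /\ O e /\ forall e', O e' -> S (jj i e').
Proof.
  apply (amg_ind (fun S => forall e, (~ exists a, emb i a = e) -> S (jj i e) ->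
  exists O, isopen O /\ O e /\ forall e', O e' -> S (jj i e'))).
  - split; [|split].
    + intros e _ _. exists (fun _ => True). split; [apply open_setT| auto].
    + intros U V HU HV e H [Ue Ve]. destruct (HU e H Ue) as [O1 [HO1 [O1e H1]]].
      destruct (HV e H Ve) as [O2 [HO2 [O2e H2]]]. exists (fun e => O1 e /\ O2 e).
      split; [apply open_setI; auto|]. split; auto. intros e' [? ?]; split; auto.
    + intros F HF e H [U [FU Ue]]. destruct (HF U FU e H Ue) as [O [HO [Oe HO']]].
      exists O; split; auto; split; auto. intros e' Oe'. exists U; auto.
  - intros B [[i0 [O0 [HO0 HB]]] | [U [HU HB]]] e H HBe.
    + apply HB in HBe as [e0 [O0e0 Heq]]. apply J5 in Heq; auto.
      assert (i0 = i) by (apply (f_equal (@projT1 _ _)) in Heq; exact Heq). subst i0.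
      apply inj_pair2 in Heq. subst e0.
      exists O0. split; auto. split; auto. intros e' Oe'. apply HB. eauto.
    + exists (WM i (fun a => U (proj1_sig a))). split; [apply Wmax_open|]. split.
      * apply VU_j; auto. apply HB; auto.
      * intros e' He'. apply HB. apply VU_j; auto.
Qed.

Lemma Res : forall S, amg_open X AA E emb S -> forall x, residual AA x -> S (inl x) ->
  exists U, isopen U /\ U x /\ forall p, VV U p -> S p.
Proof.
  apply (amg_ind (fun S => forall x, residual AA x -> S (inl x) ->
  exists U, isopen U /\ U x /\ forall p, VV U p -> S p)).
  - split; [|split].
    + intros x _ _. exists (fun _ => True). split; [apply open_setT| auto].
    + intros U V HU HV x H [Ux Vx]. destruct (HU x H Ux) as [O1 [HO1 [O1x H1]]].
      destruct (HV x H Vx) as [O2 [HO2 [O2x H2]]]. exists (fun e => O1 e /\ O2 e).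
      split; [apply open_setI; auto|]. split; auto. intros p Hp; split.
      * apply H1. apply (VU_mono O1 (fun e => O1 e /\ O2 e)); auto. tauto.
      * apply H2. apply (VU_mono O2 (fun e => O1 e /\ O2 e)); auto. tauto.
    + intros F HF x H [U [FU Ux]]. destruct (HF U FU x H Ux) as [O [HO [Ox HO']]].
      exists O; split; auto; split; auto. intros p Hp. exists U; auto.
  - intros B [[i0 [O0 [HO0 HB]]] | [U [HU HB]]] x H HBx.
    + apply HB in HBx as [e0 [_ Heq]]. apply J3 in Heq as [a [_ <-]].
      exfalso. apply H. exists (proj1_sig i0). split; [apply (proj2_sig i0)| apply (proj2_sig a)].
    + exists U. split; auto. split; [apply (HB (inl x)); auto|]. intros p Hp; apply HB; auto.
Qed.

Lemma Apt i (HC : forall i', i' <> i -> exists OC, isopen OC /\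
      forall e, OC e <-> exists a, emb i a = e /\ proj1_sig i' (proj1_sig a)) :
  forall S, amg_open X AA E emb S -> forall a : Asp i, S (inl (proj1_sig a)) ->
  exists O, isopen O /\ O (emb i a) /\ forall e', O e' -> S (jj i e').
Proof.
  apply (amg_ind (fun S => forall a : Asp i, S (inl (proj1_sig a)) ->
  exists O, isopen O /\ O (emb i a) /\ forall e', O e' -> S (jj i e'))).
  - split; [|split].
    + intros a _. exists (fun _ => True). split; [apply open_setT| auto].
    + intros U V HU HV a [Ue Ve]. destruct (HU a Ue) as [O1 [HO1 [O1e H1]]].
      destruct (HV a Ve) as [O2 [HO2 [O2e H2]]]. exists (fun e => O1 e /\ O2 e).
      split; [apply open_setI; auto|]. split; auto. intros e' [? ?]; split; auto.
    + intros F HF a [U [FU Ue]]. destruct (HF U FU a Ue) as [O [HO [Oe HO']]].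
      exists O; split; auto; split; auto. intros e' Oe'. exists U; auto.
  - intros B [[i0 [O0 [HO0 HB]]] | [U [HU HB]]] a HBa.
    + apply HB in HBa as [e0 [O0e0 Heq]].
      destruct (classic (i0 = i)) as [->|Hne].
      * rewrite <- J1 in Heq. apply J4 in Heq. subst e0.
        exists O0. split; auto. split; auto. intros e' Oe'. apply HB; eauto.
      * apply J3 in Heq as [a0 [<- Ha0]].
        destruct (emb_pre i0 O0 HO0) as [U0 [HU0 HU0']].
        destruct (exists_W i U0 HU0) as [W [HW HW']].
        destruct (HC i0 Hne) as [OC [HOC HOC']].
        exists (fun e => OC e /\ W e). split; [apply open_setI; auto|]. split.
        -- split.
           ++ apply HOC'. exists a; split; auto. rewrite <- Ha0. apply (proj2_sig a0).
           ++ apply HW'. rewrite <- Ha0. apply HU0'; auto.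
        -- intros e' [OCe We]. apply HOC' in OCe as [a' [<- Ha']].
           rewrite J1. apply HB.
           exists (emb i0 (exist _ (proj1_sig a') Ha')). split.
           ++ apply HU0'. simpl. apply HW'; auto.
           ++ rewrite J1; reflexivity.
    + exists (WM i (fun a => U (proj1_sig a))). split; [apply Wmax_open|]. split.
      * apply Wmax_emb'; auto. apply HB in HBa; exact HBa.
      * intros e' He'. apply HB. apply VU_j; auto.
Qed.

Lemma jj_cont i (HC : forall i', i' <> i -> exists OC, isopen OC /\
      forall e, OC e <-> exists a, emb i a = e /\ proj1_sig i' (proj1_sig a)) :
  @continuous (E i) AM (fun e => jj i e).
Proof.
  intros S HS. apply local_open. intros e Se.
  destruct (classic (exists a, emb i a = e)) as [[a <-]|Hn].
  - rewrite J1 in Se. destruct (Apt i HC S HS a Se) as [O [HO [Oe HO']]]. exists O; auto.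
  - destruct (Rem i S HS e Hn Se) as [O [HO [Oe HO']]]. exists O; auto.
Qed.


Lemma part_i (Z : space) (f : car -> Z) : regular Z ->
  (@continuous AM Z f <->
   (continuous (fun x : X => f (@amg_in X AA E emb x)) /\
    forall i, continuous (fun e : E i => f (jj i e)))).
Proof.
  intros [_ HZ]. split.
  - intros Hf. split.
    + apply (@cont_comp X AM Z _ f amg_in_cont Hf).
    + intros i V HV. apply local_open. intros e He.
      assert (HF : isclosed (fun z => ~ V z)) by (apply open_closed_compl; auto).
      destruct (HZ _ (f (jj i e)) HF) as [U1 [V1 [HU1 [HV1 [U1e [HFV1 HUV]]]]]].
      { intro H; apply H; auto. }
      destruct (classic (exists a, emb i a = e)) as [[a <-]|Hn].
      * pose (U := fun x => U1 (f (inl x))).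
        assert (HU : isopen U) by (apply (@cont_comp X AM Z _ f amg_in_cont Hf); auto).
        exists (WM i (fun a => U (proj1_sig a))). split; [apply Wmax_open|]. split.
        -- apply Wmax_emb'; auto. unfold U. rewrite <- J1. auto.
        -- intros e' He'. apply NNPP; intro HnV. apply HFV1 in HnV.
           destruct (classic (exists a, emb i a = e')) as [[a' <-]|Hn'].
           ++ apply Wmax_emb in He'. unfold U in He'. rewrite J1 in HnV. apply (HUV _ (conj He' HnV)).
           ++ destruct (Rem i (fun p => V1 (f p)) (Hf _ HV1) e' Hn' HnV) as [O [HO [Oe' HO']]].
              destruct (emb_dense i (fun e => O e /\ WM i (fun a => U (proj1_sig a)) e)
                 (open_setI _ _ _ HO (Wmax_open _ _)) e' (conj Oe' He')) as [a'' [Oa Wa]].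
              apply Wmax_emb in Wa. specialize (HO' _ Oa). rewrite J1 in HO'.
              apply (HUV _ (conj Wa HO')).
      * destruct (Rem i (fun p => V (f p)) (Hf _ HV) e Hn He) as [O [HO [Oe HO']]].
        exists O; auto.
  - intros [Hin Hj] V HV. apply local_open. intros p Hp.
    destruct p as [x | [i [e H]]].
    + assert (HF : isclosed (fun z => ~ V z)) by (apply open_closed_compl; auto).
      destruct (HZ _ (f (inl x)) HF) as [U1 [V1 [HU1 [HV1 [U1e [HFV1 HUV]]]]]].
      { intro H; apply H; auto. }
      pose (U := fun x => U1 (f (inl x))).
      assert (HU : isopen U) by (apply (Hin _ HU1)).
      exists (VV U). split; [apply VU_open; auto|]. split; [exact U1e|].
      intros q Hq. apply NNPP; intro HnV. apply HFV1 in HnV.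
      destruct q as [y | [i [e H]]].
      * apply (HUV _ (conj Hq HnV)).
      * simpl in Hq. destruct Hq as [W [HW [HW' We]]].
        assert (Oe : V1 (f (jj i e))) by (rewrite (J2 i e H); exact HnV).
        destruct (emb_dense i (fun e => W e /\ V1 (f (jj i e)))
           (open_setI _ _ _ HW (Hj i _ HV1)) e (conj We Oe)) as [a [Wa Va]].
        apply HW' in Wa. rewrite J1 in Va. apply (HUV _ (conj Wa Va)).
    + exists (fun p => exists e, V (f (jj i e)) /\ jj i e = p). split; [apply jO_open; apply Hj; auto|].
      split.
      * exists e. rewrite (J2 i e H). auto.
      * intros q [e' [He' <-]]. auto.
Qed.

Lemma compact_transfer i (K : X -> Prop) : compact_set K -> (forall x, K x -> proj1_sig i x) ->
  compact_set (fun e : E i => exists a, emb i a = e /\ K (proj1_sig a)).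
Proof.
  intros HK HKA F HF Hcov.
  destruct (HK (fun U : X -> Prop => isopen U /\ exists W, F W /\ forall a, W (emb i a) <-> U (proj1_sig a)))
    as [l [Hl Hlc]].
  - intros U [HU _]; exact HU.
  - intros x Kx. pose (a := exist (proj1_sig i) x (HKA x Kx) : Asp i).
    destruct (Hcov (emb i a)) as [W [FW Wa]]. { exists a; split; auto. }
    destruct (emb_pre i W (HF W FW)) as [U [HU HU']].
    exists U. split. { split; auto. exists W; auto. } apply (HU' a). exact Wa.
  - destruct (list_choice (fun U W => F W /\ forall a, W (emb i a) <-> U (proj1_sig a)) l) as [lw [Hlw1 Hlw2]].
    + intros U HU. destruct (Hl U HU) as [_ H]; exact H.
    + exists lw. split.
      * intros W HW; destruct (Hlw1 W HW) as [U [_ [FW _]]]; exact FW.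
      * intros e [a [<- Ka]]. destruct (Hlc _ Ka) as [U [HUl Ua]].
        destruct (Hlw2 U HUl) as [W [HW [_ HWU]]]. exists W; split; auto; apply HWU; auto.
Qed.

Lemma HC_of i i' : hausdorff (E i) -> compact_set (fun x => proj1_sig i x /\ proj1_sig i' x) ->
  exists OC, isopen OC /\ forall e, OC e <-> exists a, emb i a = e /\ proj1_sig i' (proj1_sig a).
Proof.
  intros HH HK.
  pose (C := fun e : E i => exists a, emb i a = e /\ (proj1_sig i (proj1_sig a) /\ proj1_sig i' (proj1_sig a))).
  assert (HCc : compact_set C) by (apply (compact_transfer i (fun x => proj1_sig i x /\ proj1_sig i' x)); auto; tauto).
  exists (fun e => exists W, isopen W /\ W e /\ forall a, W (emb i a) -> proj1_sig i' (proj1_sig a)).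
  split.
  - apply local_open. intros e [W [HW [We HW']]]. exists W. split; auto. split; auto.
    intros y Wy. exists W; auto.
  - intros e; split.
    + intros [W [HW [We HW']]]. apply NNPP; intro Hn.
      assert (HnC : ~ C e). { intros [a [<- [_ Ha]]]. apply Hn. eauto. }
      destruct (sep_point_compact HH C e HCc HnC) as [U [V [HU [HV [Ue [HCV HUV]]]]]].
      destruct (emb_dense i (fun e => W e /\ U e) (open_setI _ _ _ HW HU) e (conj We Ue)) as [a [Wa Ua]].
      apply (HUV (emb i a)). split; auto. apply HCV. exists a. split; auto. split; [apply (proj2_sig a)| auto].
    + intros [a [<- Ha]].
      destruct (exists_W i (proj1_sig i') (proj1 (HA1 _ (proj2_sig i')))) as [W [HW HW']].
      exists W. split; auto. split; [apply HW'; auto|]. intros a' Wa'. apply HW'; auto.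
Qed.

Lemma in_embedding : embedding (fun x : X => (@amg_in X AA E emb x : AM)).
Proof.
  split; [intros y1 y2 H; injection H; auto|]. split; [apply amg_in_cont|].
  intros U HU. exists (VV U). split; [apply VU_open; auto|]. intros y; simpl; tauto.
Qed.

Lemma in_dense : dense_image (fun x : X => (@amg_in X AA E emb x : AM)).
Proof.
  intros W HW p Wp. destruct p as [x | [i [e H]]].
  - exists x; auto.
  - rewrite <- (J2 i e H) in Wp. destruct (Rem i W HW e H Wp) as [O [HO [Oe HO']]].
    destruct (emb_dense i O HO e Oe) as [a Oa]. exists (proj1_sig a).
    specialize (HO' _ Oa). rewrite J1 in HO'. exact HO'.
Qed.


Hypothesis HXh : hausdorff X.
Hypothesis HA2 : condA2 AA.
Hypothesis HA3 : condA3 AA.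
Hypothesis HA4 : condA4 AA.
Hypothesis HEc : forall i, Defs.compact (E i) /\ hausdorff (E i).

Lemma HC_all i : forall i', i' <> i -> exists OC, isopen OC /\
      forall e, OC e <-> exists a, emb i a = e /\ proj1_sig i' (proj1_sig a).
Proof.
  intros i' Hne. apply HC_of; [apply HEc|]. apply HA2; [apply (proj2_sig i)| apply (proj2_sig i')|].
  intro Heq; apply Hne; symmetry; apply idx_eq; auto.
Qed.

Lemma jj_cont' i : @continuous (E i) AM (fun e => jj i e).
Proof. apply jj_cont, HC_all. Qed.

Lemma sep_in_rem x i e (H : ~ exists a, emb i a = e) :
  exists U V : car -> Prop, amg_open X AA E emb U /\ amg_open X AA E emb V /\ U (inl x) /\
    V (inr (existT _ i (exist _ e H))) /\ forall z, ~ (U z /\ V z).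
Proof.
  destruct (classic (proj1_sig i x)) as [Ax|Ax].
  - pose (a := exist _ x Ax : Asp i).
    assert (Hne : emb i a <> e) by (intro; apply H; eauto).
    destruct (proj2 (HEc i) _ _ Hne) as [O1 [O2 [HO1 [HO2 [O1a [O2e HO]]]]]].
    exists (fun p => exists e, O1 e /\ jj i e = p), (fun p => exists e, O2 e /\ jj i e = p).
    split; [apply jO_open; auto|]. split; [apply jO_open; auto|]. split.
    { exists (emb i a). rewrite J1. auto. } split.
    { exists e. rewrite (J2 i e H). auto. }
    intros z [[e1 [O1e1 <-]] [e2 [O2e2 Heq]]]. apply J4 in Heq. subst. apply (HO e1); auto.
  - exists (VV (fun y => ~ proj1_sig i y)), (fun p => exists e, True /\ jj i e = p).
    split; [apply VU_open; apply (proj2 (HA1 _ (proj2_sig i)))|].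
    split; [apply jO_open; apply open_setT|]. split; [exact Ax|]. split.
    { exists e. rewrite (J2 i e H). auto. }
    intros z [Hz [e2 [_ <-]]]. apply VU_j in Hz; [|apply (proj2 (HA1 _ (proj2_sig i)))].
    destruct Hz as [W [HW [HW' We]]].
    destruct (emb_dense i W HW e2 We) as [a Wa]. apply HW' in Wa. apply Wa, (proj2_sig a).
Qed.

Lemma amg_hausdorff : hausdorff AM.
Proof.
  intros p q Hpq. destruct p as [x | [i [e H]]], q as [y | [i' [e' H']]].
  - assert (Hxy : x <> y) by (intro; subst; auto).
    destruct (HXh x y Hxy) as [U [U' [HU [HU' [Ux [Uy HUU]]]]]].
    exists (VV U), (VV U'). split; [apply VU_open; auto|]. split; [apply VU_open; auto|].
    split; [exact Ux|]. split; [exact Uy|].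
    intros [z | [i [e H]]]; simpl.
    + apply HUU.
    + apply Wmax_disj; auto.
  - apply sep_in_rem.
  - destruct (sep_in_rem y i e H) as [U [V [HU [HV [Uy [Ve HUV]]]]]].
    exists V, U. repeat split; auto. intros z [? ?]; apply (HUV z); auto.
  - destruct (classic (i = i')) as [<-|Hne].
    + assert (Hee : e <> e'). { intros <-. apply Hpq. do 3 f_equal. apply proof_irrelevance. }
      destruct (proj2 (HEc i) _ _ Hee) as [O1 [O2 [HO1 [HO2 [O1a [O2e HO]]]]]].
      exists (fun p => exists e, O1 e /\ jj i e = p), (fun p => exists e, O2 e /\ jj i e = p).
      split; [apply jO_open; auto|]. split; [apply jO_open; auto|]. split.
      { exists e. rewrite (J2 i e H). auto. } split.
      { exists e'. rewrite (J2 i e' H'). auto. }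
      intros z [[e1 [O1e1 <-]] [e2 [O2e2 Heq]]]. apply J4 in Heq. subst. apply (HO e1); auto.
    + assert (HK : compact_set (fun x => proj1_sig i x /\ proj1_sig i' x)).
      { apply HA2; [apply (proj2_sig i)| apply (proj2_sig i')|]. intro Heq; apply Hne, idx_eq; auto. }
      pose (C1 := fun e : E i => exists a, emb i a = e /\ (proj1_sig i (proj1_sig a) /\ proj1_sig i' (proj1_sig a))).
      pose (C2 := fun e : E i' => exists a, emb i' a = e /\ (proj1_sig i' (proj1_sig a) /\ proj1_sig i (proj1_sig a))).
      assert (HC1 : isclosed C1).
      { apply compact_closed; [apply HEc|]. apply (compact_transfer i (fun x => proj1_sig i x /\ proj1_sig i' x)); auto; tauto. }
      assert (HC2 : isclosed C2).
      { apply compact_closed; [apply HEc|]. apply (compact_transfer i' (fun x => proj1_sig i' x /\ proj1_sig i x)); [|tauto].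
        apply (compact_set_ext _ _ HK). tauto. }
      exists (fun p => exists e, ~ C1 e /\ jj i e = p), (fun p => exists e, ~ C2 e /\ jj i' e = p).
      split; [apply jO_open; auto|]. split; [apply jO_open; auto|]. split.
      { exists e. rewrite (J2 i e H). split; auto. intros [a [<- _]]. apply H; eauto. } split.
      { exists e'. rewrite (J2 i' e' H'). split; auto. intros [a [<- _]]. apply H'; eauto. }
      intros z [[e1 [C1e1 <-]] [e2 [C2e2 Heq]]].
      destruct (classic (exists a, emb i a = e1)) as [[a1 <-]|Hn1].
      * rewrite J1 in Heq. apply J3 in Heq as [a2 [<- Ha2]]. apply C1e1. exists a1. split; auto.
        split; [apply (proj2_sig a1)|]. rewrite <- Ha2. apply (proj2_sig a2).
      * apply J5 in Heq; auto. apply (f_equal (@projT1 _ _)) in Heq. simpl in Heq. auto.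
Qed.

Lemma cover_Ei (F : (car -> Prop) -> Prop) : (forall S, F S -> amg_open X AA E emb S) ->
  (forall p, exists S, F S /\ S p) -> forall i,
  exists ls, (forall S, In S ls -> F S) /\ forall e, exists S, In S ls /\ S (jj i e).
Proof.
  intros HF Hcov i.
  destruct (proj1 (HEc i) (fun O => isopen O /\ exists S, F S /\ forall e, O e -> S (jj i e))) as [lo [Hlo Hloc]].
  - intros O [HO _]; auto.
  - intros e. destruct (Hcov (jj i e)) as [S [FS Se]].
    exists (fun e => S (jj i e)). split; auto. split; [apply (jj_cont' i S (HF S FS))|]. exists S; auto.
  - destruct (list_choice (fun O S => F S /\ forall e, O e -> S (jj i e)) lo) as [ls [H1 H2]].
    + intros O HO. apply (Hlo O HO).
    + exists ls. split.
      * intros S HS. destruct (H1 S HS) as [O [_ [? _]]]; auto.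
      * intros e. destruct (Hloc e) as [O [HO Oe]]. destruct (H2 O HO) as [S [HS [_ HS']]]. eauto.
Qed.

Lemma amg_compact : Defs.compact AM.
Proof.
  intros F HF Hcov.
  destruct (HA3 (fun U : X -> Prop => isopen U /\ exists S, F S /\ forall p, VV U p -> S p)) as [lu [Hlu Hluc]].
  - intros U [HU _]; auto.
  - intros x Hx. destruct (Hcov (inl x)) as [S [FS Sx]].
    destruct (Res S (HF S FS) x Hx Sx) as [U [HU [Ux HUS]]]. exists U; split; [split; auto; exists S; auto| auto].
  - destruct (HA4 (fun U => In U lu)) as [la [Hla Hlac]].
    + intros U HU; apply (Hlu U HU).
    + intros x Hx; apply Hluc; auto.
    + destruct (list_choice (fun U S => F S /\ forall p, VV U p -> S p) lu) as [ls1 [Hls1a Hls1b]].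
      { intros U HU. apply (Hlu U HU). }
      destruct (list_choice (fun A ls => (forall S, In S ls -> F S) /\
          forall i, proj1_sig i = A -> forall e, exists S, In S ls /\ S (jj i e)) la) as [lls [Hll1 Hll2]].
      { intros A HA. destruct (cover_Ei F HF Hcov (exist _ A (Hla A HA))) as [ls [H1 H2]].
        exists ls. split; auto. intros i Hi e. assert (i = exist _ A (Hla A HA)) as -> by (apply idx_eq; auto). auto. }
      exists (ls1 ++ concat lls). split.
      * intros S HS. apply in_app_or in HS as [HS|HS].
        -- destruct (Hls1a S HS) as [U [_ [? _]]]; auto.
        -- apply in_concat in HS as [ls [Hls HS]]. destruct (Hll1 ls Hls) as [A [_ [H1 _]]]. auto.
      * assert (Hc1 : forall p U, In U lu -> VV U p -> exists S, In S (ls1 ++ concat lls) /\ S p).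
        { intros p U HU HUp. destruct (Hls1b U HU) as [S [HS [_ HS']]]. exists S. split; auto. apply in_or_app; auto. }
        assert (Hc2 : forall A i e, In A la -> proj1_sig i = A -> exists S, In S (ls1 ++ concat lls) /\ S (jj i e)).
        { intros A i e HA Hi. destruct (Hll2 A HA) as [ls [Hls [_ H2]]]. destruct (H2 i Hi e) as [S [HS Se]].
          exists S. split; auto. apply in_or_app; right. apply in_concat; eauto. }
        assert (Hc3 : forall x A, In A la -> A x -> exists S, In S (ls1 ++ concat lls) /\ S (inl x)).
        { intros x A HA Ax. pose (i := exist _ A (Hla A HA) : Idx X AA).
          pose (a := exist _ x Ax : Asp i). replace (@inl X _ x) with (jj i (emb i a)) by (rewrite J1; reflexivity). apply (Hc2 A); auto. }
        intros [x | [i [e H]]].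
        -- destruct (classic (residual AA x)) as [Hr|Hr].
           ++ destruct (Hluc x Hr) as [U [HU Ux]]. apply (Hc1 _ U); auto.
           ++ apply NNPP in Hr. destruct Hr as [A [HAA Ax]].
              destruct (classic (In A la)) as [HA|HA]; [apply (Hc3 x A); auto|].
              destruct (Hlac A HAA HA) as [U [HU HUA]]. destruct (HUA x Ax) as [Ux|[A' [HA' A'x]]].
              ** apply (Hc1 _ U); auto.
              ** apply (Hc3 x A'); auto.
        -- destruct (classic (In (proj1_sig i) la)) as [HA|HA].
           ++ rewrite <- (J2 i e H). apply (Hc2 (proj1_sig i)); auto.
           ++ destruct (Hlac _ (proj2_sig i) HA) as [U [HU HUA]]. apply (Hc1 _ U); auto. simpl.
              assert (HUo : isopen U) by (apply (Hlu U HU)).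
              pose (K := fun x => proj1_sig i x /\ exists A', In A' la /\ A' x).
              assert (HK : compact_set K).
              { apply compact_union_list. intros A' HA'. apply HA2; [apply (proj2_sig i)| apply Hla; auto|].
                intros Heq; rewrite Heq in HA; contradiction. }
              pose (Ci := fun e : E i => exists a, emb i a = e /\ K (proj1_sig a)).
              assert (HCi : isclosed Ci).
              { apply compact_closed; [apply HEc|]. apply compact_transfer; auto. intros x [? _]; auto. }
              destruct (exists_W i U HUo) as [WU [HWU HWU']].
              exists (fun e => ~ Ci e \/ WU e). split; [apply open_union2; auto|]. split.
              ** intros a; split.
                 --- intros [Hn|Wa]; [|apply HWU'; auto].
                     destruct (HUA (proj1_sig a) (proj2_sig a)) as [Ua|Hin]; auto.
                     exfalso; apply Hn. exists a. split; auto. split; auto. apply (proj2_sig a).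
                 --- intros Ua. right. apply HWU'; auto.
              ** left. intros [a [<- _]]. apply H; eauto.
Qed.

Lemma amg_compactification : compactification X AM (fun x => @amg_in X AA E emb x).
Proof.
  split; [apply amg_compact|]. split; [apply amg_hausdorff|]. split; [apply in_embedding| apply in_dense].
Qed.

End AmgS.

Lemma hemb_of {X : space} {AA : (X -> Prop) -> Prop} (E : Idx X AA -> space) (emb : forall i, Asp i -> E i) :
  (forall i, compactification (Asp i) (E i) (emb i)) -> forall i, embedding (emb i) /\ dense_image (emb i).
Proof. intros H i. destruct (H i) as [_ [_ [? ?]]]. auto. Qed.

Lemma hec_of {X : space} {AA : (X -> Prop) -> Prop} (E : Idx X AA -> space) (emb : forall i, Asp i -> E i) :
  (forall i, compactification (Asp i) (E i) (emb i)) -> forall i, Defs.compact (E i) /\ hausdorff (E i).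
Proof. intros H i. destruct (H i) as [? [? _]]. auto. Qed.

Lemma ext_map (X : space) (AA : (X -> Prop) -> Prop) (hA1 : condA1 AA) (E : Idx X AA -> space)
  (emb : forall i, Asp i -> E i) (Hemb : forall i, embedding (emb i) /\ dense_image (emb i))
  (Z : space) (HZ : regular Z) (g0 : X -> Z) (G : forall i, E i -> Z) :
  continuous g0 -> (forall i, continuous (G i)) -> (forall i a, G i (emb i a) = g0 (proj1_sig a)) ->
  exists F : Amg X AA E emb -> Z, continuous F /\ forall x, F (amg_in x) = g0 x.
Proof.
  intros H0 HG HGe.
  exists (fun p : amg_carrier X AA E emb => match p with
            | inl x => g0 x | inr q => G (projT1 q) (proj1_sig (projT2 q)) end).
  split; [|reflexivity].
  apply (part_i X AA E emb Hemb hA1 Z _ HZ). split.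
  - exact H0.
  - intros i. apply (cont_ext _ (G i)); auto. intros e.
    destruct (classic (exists a, emb i a = e)) as [[a <-]|Hn].
    + rewrite (J1 X AA E emb Hemb). symmetry; apply HGe.
    + rewrite (J2 X AA E emb i e Hn). reflexivity.
Qed.

Lemma sub_proj_cont (K : space) (P : K -> Prop) : @continuous (sub K P) K (fun c => proj1_sig c).
Proof. intros V HV. exists V. split; auto. tauto. Qed.

Theorem proposition7p14
  (X : space) (AA : (X -> Prop) -> Prop)
  (hX : tychonoff X)
  (hA1 : condA1 AA) (hA2 : condA2 AA) (hA3 : condA3 AA) (hA4 : condA4 AA)
  (cE : Idx X AA -> space) (cemb : forall i, Asp i -> cE i)
  (hc : forall i, compactification (Asp i) (cE i) (cemb i))
  (dE : Idx X AA -> space) (demb : forall i, Asp i -> dE i)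
  (hd : forall i, compactification (Asp i) (dE i) (demb i)) :
  (* (i) *)
  (forall (E : Idx X AA -> space) (emb : forall i, Asp i -> E i),
     (forall i, embedding (emb i) /\ dense_image (emb i)) ->
     forall (Z : space) (f : Amg X AA E emb -> Z), regular Z ->
       (continuous f <->
        (continuous (fun x : X => f (amg_in x)) /\
         forall i, continuous (fun e : E i => f (amg_j i e))))) /\
  (* (ii) *)
  compactification X (Amg X AA cE cemb) amg_in /\
  (* (iii) *)
  ((forall i, comp_ge (demb i) (cemb i)) ->
     comp_ge (@amg_in X AA dE demb : X -> Amg X AA dE demb)
             (@amg_in X AA cE cemb : X -> Amg X AA cE cemb)) /\
  (* (iv) *)
  (forall (K : space) (h : X -> K), compactification X K h ->
     comp_ge (@amg_in X AA (closE AA K h) (closEmb AA K h)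
                : X -> Amg X AA (closE AA K h) (closEmb AA K h)) h) /\
  (* (v) *)
  (forall (bE : Idx X AA -> space) (bemb : forall i, Asp i -> bE i),
     (forall i, cech_stone (Asp i) (bE i) (bemb i)) ->
     cech_stone X (Amg X AA bE bemb) amg_in).
Proof.
  assert (HXh : hausdorff X) by (apply tychonoff_hausdorff; auto).
  assert (gen_ii : forall (E : Idx X AA -> space) (emb : forall i, Asp i -> E i),
     (forall i, compactification (Asp i) (E i) (emb i)) ->
     compactification X (Amg X AA E emb) amg_in).
  { intros E emb H. apply (amg_compactification X AA E emb (hemb_of E emb H) hA1 HXh hA2 hA3 hA4 (hec_of E emb H)). }
  split; [|split; [|split; [|split]]].
  - intros E emb Hemb Z f HZ. apply part_i; auto.
  - apply gen_ii; auto.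
  - intros H.
    pose (g := fun i => proj1_sig (constructive_indefinite_description _ (H i))).
    assert (Hg : forall i, continuous (g i) /\ forall a, g i (demb i a) = cemb i a).
    { intros i. unfold g. destruct (constructive_indefinite_description _ (H i)) as [gi Hgi]. exact Hgi. }
    destruct (gen_ii cE cemb hc) as [HcC [HcH _]].
    destruct (ext_map X AA hA1 dE demb (hemb_of dE demb hd) (Amg X AA cE cemb)
       (compact_hausdorff_regular _ HcC HcH) (fun x => amg_in x)
       (fun i e => amg_j i (g i e))) as [F [HF HF']].
    + apply (amg_in_cont X AA cE cemb (hemb_of cE cemb hc) hA1).
    + intros i. apply (@cont_comp (dE i) (cE i) (Amg X AA cE cemb) (g i) (fun e => @amg_j X AA cE cemb i e)); [apply Hg|].
      apply (jj_cont' X AA cE cemb (hemb_of cE cemb hc) hA1 hA2 (hec_of cE cemb hc)).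
    + intros i a. simpl. rewrite (proj2 (Hg i)). apply (J1 X AA cE cemb (hemb_of cE cemb hc)).
    + exists F. split; auto.
  - intros K h [HKc [HKh [Hh Hhd]]].
    assert (Hemb : forall i, embedding (closEmb AA K h i) /\ dense_image (closEmb AA K h i)).
    { intros i. destruct Hh as [hinj [hcont hopen]]. split; [split; [|split]|].
      - intros a1 a2 Heq. apply (f_equal (@proj1_sig _ _)) in Heq. simpl in Heq. apply hinj in Heq.
        destruct a1 as [x1 p1], a2 as [x2 p2]; simpl in Heq; subst. f_equal; apply proof_irrelevance.
      - intros V [W [HW HW']]. exists (fun x => W (h x)). split; [apply hcont; auto|].
        intros a. rewrite HW'. simpl. tauto.
      - intros U [U' [HU' HU'']]. destruct (hopen U' HU') as [W [HW HW']].
        exists (fun c => W (proj1_sig c)). split.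
        + exists W; split; auto; tauto.
        + intros a. rewrite HU'', HW'. simpl. tauto.
      - intros W' [W [HW HW']] c Wc. apply HW' in Wc.
        destruct (proj2_sig c W HW Wc) as [y [[x [Ax <-]] Wy]]. exists (exist _ x Ax). apply HW'. simpl. auto. }
    destruct (ext_map X AA hA1 (closE AA K h) (closEmb AA K h) Hemb K
       (compact_hausdorff_regular _ HKc HKh) h (fun i e => proj1_sig e)) as [F [HF HF']].
    + destruct Hh as [_ [? _]]; auto.
    + intros i. apply sub_proj_cont.
    + intros i a. reflexivity.
    + exists F. split; auto.
  - intros bE bemb Hb.
    assert (Hbc : forall i, compactification (Asp i) (bE i) (bemb i)) by (intros i; apply Hb).
    split; [apply gen_ii; auto|].
    intros Z f HZc HZh Hf.
    assert (HG : forall i, exists Fi : bE i -> Z, continuous Fi /\ forall a, Fi (bemb i a) = f (proj1_sig a)).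
    { intros i. apply (proj2 (Hb i)); auto. apply (cont_comp (fun a : Asp i => proj1_sig a) f); auto. apply sub_proj_cont. }
    pose (G := fun i => proj1_sig (constructive_indefinite_description _ (HG i))).
    assert (HG' : forall i, continuous (G i) /\ forall a, G i (bemb i a) = f (proj1_sig a)).
    { intros i. unfold G. destruct (constructive_indefinite_description _ (HG i)) as [gi Hgi]. exact Hgi. }
    destruct (ext_map X AA hA1 bE bemb (hemb_of bE bemb Hbc) Z
       (compact_hausdorff_regular _ HZc HZh) f G) as [F [HF HF']]; auto.
    + intros i; apply HG'.
    + intros i a; apply HG'.
    + exists F; auto.
Qed.
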